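(* If $\phi\in C(\mathbb{Z}_p,\mathbb{C}_p)$ and $x,y\in\mathbb{Z}_p$, then $$T^x(\phi)(y)=\int_{\mathbb{Z}_p}(\mathbf 1-\mathbf x)^{\star y}\,d\mu_{\phi,x}=\big((\mathbf 1-\mathbf x)^{\star y}\star\phi\big)(x).$$
   Context: Fix a prime $p$. $\mathbb{C}_p$ denotes the completion of an algebraic closure of $\mathbb{Q}_p$, with absolute value $|\cdot|$ normalized by $|p|=1/p$. $C(\mathbb{Z}_p,\mathbb{C}_p)$ is the $\mathbb{C}_p$-Banach space of continuous functions $\mathbb{Z}_p\to\mathbb{C}_p$ with the sup-norm $\|\cdot\|$. For $n\in\mathbb{Z}_{\ge0}$ and $x\in\mathbb{Z}_p$, $\binom{x}{n}=x(x-1)\cdots(x-n+1)/n!$. For $\phi$ let $(\nabla\phi)(x)=\phi(x+1)-\phi(x)$; every $\phi$ has the Mahler expansion $\phi(x)=\sum_{n\ge0}(\nabla^n\phi)(0)\binom{x}{n}$. The convolution $\phi\star\psi$ is the continuous function with Mahler coefficients $(\nabla^n(\phi\star\psi))(0)=\sum_{k=0}^n\binom nk(\nabla^k\phi)(0)(\nabla^{n-k}\psi)(0)$. For $y\in\mathbb{Z}_p$, $S^y(\phi)(x)=\sum_{k\ge0}(-1)^k k!\binom yk\binom xk\phi(x-k)$; for $x\in\mathbb{Z}_p$, $T^x(\phi)(y)=S^y(\phi)(x)$. $\mathbf 1$ is the constant function $1$, $\mathbf x$ is $x\mapsto x$, and $(\mathbf 1-\mathbf x)^{\star y}:=S^y(\mathbf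 1)$. A measure is a bounded $\mathbb{C}_p$-linear functional on $C(\mathbb{Z}_p,\mathbb{C}_p)$, its value on $\chi$ written $\int_{\mathbb{Z}_p}\chi\,d\mu$; for $\phi\in C(\mathbb{Z}_p,\mathbb{C}_p)$ and $x\in\mathbb{Z}_p$, $\mu_{\phi,x}$ is the measure with $\int_{\mathbb{Z}_p}\chi\,d\mu_{\phi,x}=\sum_{n\ge0}(\nabla^n\chi)(0)\binom{x}{n}\phi(x-n)$. *)

(* Defs.v *)
From HB Require Import structures.
From mathcomp Require Import all_boot all_order all_algebra.
From mathcomp Require Import reals.
From Stdlib Require Import ClassicalEpsilon.
Set Implicit Arguments. Unset Strict Implicit. Unset Printing Implicit Defensive.
Import Order.TTheory GRing.Theory Num.Theory.
Local Open Scope ring_scope.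

(* C_p, axiomatized up to isometric isomorphism: an algebraically closed   *)
(* field K with a real absolute value abs which is multiplicative,         *)
(* ultrametric, complete, normalized by |p| = 1/p, and in which the        *)
(* algebraic numbers (elements algebraic over Q) are dense.  Such a valued *)
(* field is (isometrically isomorphic to) the completion of an algebraic   *)
(* closure of Q_p.                                                         *)

Definition algebraic_over_Q (K : closedFieldType) (x : K) : Prop :=
  exists q : {poly rat}, q != 0 /\ root (map_poly (@ratr K) q) x.

Record is_Cp (p : nat) (K : closedFieldType) (R : realType) (abs : K -> R)
  : Prop := IsCp {
  Cp_abs_eq0 : forall x, (abs x = 0) <-> (x = 0);
  Cp_abs_ge0 : forall x, 0 <= abs x;
  Cp_abs_mul : forall x y, abs (x * y) = abs x * abs y;
  Cp_abs_ultra : forall x y, abs (x + y) <= Num.max (abs x) (abs y);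
  Cp_abs_p : abs (p%:R) = (p%:R)^-1;
  Cp_complete : forall u : nat -> K,
     (forall eps : R, 0 < eps -> exists N, forall m n, (N <= m)%N -> (N <= n)%N ->
        abs (u m - u n) < eps) ->
     exists L, forall eps : R, 0 < eps -> exists N, forall n, (N <= n)%N ->
        abs (u n - L) < eps;
  Cp_algebraic_dense : forall (x : K) (eps : R), 0 < eps ->
     exists y, algebraic_over_Q y /\ abs (x - y) < eps
}.

Section Defs.
Variables (K : closedFieldType) (R : realType) (abs : K -> R).

(* Z_p inside C_p: the closure of the natural numbers. *)
Definition Zp_set (x : K) : Prop :=
  forall eps : R, 0 < eps -> exists n : nat, abs (x - n%:R) < eps.

(* continuous functions Z_p -> C_p (values outside Z_p are irrelevant) *)
Definition cont_on_Zp (phi : K -> K) : Prop :=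
  forall x, Zp_set x -> forall eps : R, 0 < eps -> exists2 delta : R, 0 < delta &
    forall z, Zp_set z -> abs (z - x) < delta -> abs (phi z - phi x) < eps.

Definition series_to (a : nat -> K) (L : K) : Prop :=
  forall eps : R, 0 < eps -> exists N, forall n, (N <= n)%N ->
    abs (\sum_(i < n) a i - L) < eps.

(* the value of a convergent series (0 by convention if it diverges) *)
Definition ssum (a : nat -> K) : K :=
  epsilon (inhabits 0) (fun L => series_to a L).

End Defs.

Definition binomK (K : fieldType) (x : K) (n : nat) : K :=
  (\prod_(i < n) (x - i%:R)) / (n`!)%:R.

Definition nabla (K : fieldType) (phi : K -> K) : K -> K :=
  fun x => phi (x + 1) - phi x.

Definition mahler (K : fieldType) (phi : K -> K) (n : nat) : K :=
  iter n (@nabla K) phi 0.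

Section Ops.
Variables (K : closedFieldType) (R : realType) (abs : K -> R).

Definition Sop (y : K) (phi : K -> K) (x : K) : K :=
  ssum abs (fun k => (-1) ^+ k * (k`!)%:R * binomK y k * binomK x k
                      * phi (x - k%:R)).

Definition Top (x : K) (phi : K -> K) (y : K) : K := Sop y phi x.

Definition one_minus_x_star (y : K) : K -> K := Sop y (fun _ => 1).

Definition integral_mu (phi : K -> K) (x : K) (chi : K -> K) : K :=
  ssum abs (fun n => mahler chi n * binomK x n * phi (x - n%:R)).

Definition conv (phi psi : K -> K) (x : K) : K :=
  ssum abs (fun n => (\sum_(k < n.+1) ('C(n, k))%:R * mahler phi k
                                       * mahler psi (n - k)) * binomK x n).

End Ops.

(* Main.v *)
Require Import Defs.
From HB Require Import structures.
From mathcomp Require Import all_boot all_order all_algebra.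
From mathcomp Require Import reals.
From mathcomp Require Import ring lra zify.
From Stdlib Require Import ClassicalEpsilon Classical FunctionalExtensionality.
Set Implicit Arguments. Unset Strict Implicit. Unset Printing Implicit Defensive.
Import Order.TTheory GRing.Theory Num.Theory.
Local Open Scope ring_scope.

Section Basic.
Variables (p : nat) (K : closedFieldType) (R : realType) (abs : K -> R).
Hypothesis hp : prime p.
Hypothesis hK : is_Cp p abs.

Lemma abs0 : abs 0 = 0.
Proof. by apply/(Cp_abs_eq0 hK). Qed.

Lemma abs_eq0 x : abs x = 0 -> x = 0.
Proof. by move/(Cp_abs_eq0 hK). Qed.

Lemma abs_ge0 x : 0 <= abs x.
Proof. exact: (Cp_abs_ge0 hK). Qed.

Lemma absM x y : abs (x * y) = abs x * abs y.
Proof. exact: (Cp_abs_mul hK). Qed.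

Lemma abs1 : abs 1 = 1.
Proof.
have h : abs 1 = abs 1 * abs 1 by rewrite -absM mulr1.
have h1 : abs 1 != 0 by apply/eqP => /abs_eq0 /eqP; rewrite oner_eq0.
by apply: (mulfI h1); rewrite mulr1 -h.
Qed.

Lemma absN1 : abs (-1) = 1.
Proof.
have h : abs (-1) * abs (-1) = 1 by rewrite -absM mulrNN mulr1 abs1.
have h0 := abs_ge0 (-1).
have : (abs (-1) - 1) * (abs (-1) + 1) = 0 by rewrite mulrBl !mulrDr h; ring.
move/eqP; rewrite mulf_eq0 => /orP [|]; first by rewrite subr_eq0 => /eqP.
by move=> /eqP H; exfalso; lra.
Qed.

Lemma absN x : abs (- x) = abs x.
Proof. by rewrite -mulN1r absM absN1 mul1r. Qed.

Lemma absB x y : abs (x - y) = abs (y - x).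
Proof. by rewrite -absN opprB. Qed.

Lemma abs_ultra x y : abs (x + y) <= Num.max (abs x) (abs y).
Proof. exact: (Cp_abs_ultra hK). Qed.

Lemma abs_add_le x y e : abs x <= e -> abs y <= e -> abs (x + y) <= e.
Proof. by move=> h1 h2; apply: le_trans (abs_ultra x y) _; rewrite ge_max h1 h2. Qed.

Lemma abs_add_lt x y e : abs x < e -> abs y < e -> abs (x + y) < e.
Proof. by move=> h1 h2; apply: le_lt_trans (abs_ultra x y) _; rewrite gt_max h1 h2. Qed.

Lemma abs_sub_le x y e : abs x <= e -> abs y <= e -> abs (x - y) <= e.
Proof. by move=> h1 h2; apply: abs_add_le; rewrite ?absN. Qed.

Lemma abs_sub_lt x y e : abs x < e -> abs y < e -> abs (x - y) < e.
Proof. by move=> h1 h2; apply: abs_add_lt; rewrite ?absN. Qed.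

Lemma abs_tri_lt x y z e : abs (x - y) < e -> abs (y - z) < e -> abs (x - z) < e.
Proof. by move=> h1 h2; have := abs_add_lt h1 h2; rewrite addrA subrK. Qed.

Lemma abs_tri_le x y z e : abs (x - y) <= e -> abs (y - z) <= e -> abs (x - z) <= e.
Proof. by move=> h1 h2; have := abs_add_le h1 h2; rewrite addrA subrK. Qed.

Lemma abs_sum_le (I : Type) (r : seq I) (P : pred I) (F : I -> K) e :
  0 <= e -> (forall i, P i -> abs (F i) <= e) -> abs (\sum_(i <- r | P i) F i) <= e.
Proof.
move=> e0 h; elim/big_rec: _ => [|i x Pi hx]; first by rewrite abs0.
exact: abs_add_le (h _ Pi) hx.
Qed.

Lemma abs_sum_lt (I : Type) (r : seq I) (P : pred I) (F : I -> K) e :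
  0 < e -> (forall i, P i -> abs (F i) < e) -> abs (\sum_(i <- r | P i) F i) < e.
Proof.
move=> e0 h; elim/big_rec: _ => [|i x Pi hx]; first by rewrite abs0.
exact: abs_add_lt (h _ Pi) hx.
Qed.

Lemma abs_nat n : abs (n%:R) <= 1.
Proof.
elim: n => [|n ih]; first by rewrite abs0.
by rewrite -natr1; apply: abs_add_le => //; rewrite abs1.
Qed.

Lemma abs_sign k : abs ((-1) ^+ k) = 1.
Proof. by elim: k => [|k ih]; rewrite ?expr0 ?abs1 // exprS absM ih absN1 mulr1. Qed.

Lemma absX x k : abs (x ^+ k) = abs x ^+ k.
Proof. by elim: k => [|k ih]; rewrite ?expr0 ?abs1 // !exprS absM ih. Qed.

Lemma absV x : x != 0 -> abs (x^-1) = (abs x)^-1.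
Proof.
move=> x0; have h : abs x * abs x^-1 = 1 by rewrite -absM mulfV // abs1.
have hx : abs x != 0 by apply/eqP => /abs_eq0 /eqP; rewrite (negbTE x0).
by rewrite -[abs x^-1]mul1r -(mulVf hx) -mulrA h mulr1.
Qed.

Lemma p_gt1 : (1 < p)%N. Proof. exact: prime_gt1. Qed.

Lemma pR_gt0 : 0 < (p%:R : R).
Proof. by rewrite ltr0n prime_gt0. Qed.

Lemma absp : abs (p%:R) = (p%:R)^-1. Proof. exact: (Cp_abs_p hK). Qed.

Lemma char0 n : (0 < n)%N -> (n%:R : K) != 0.
Proof.
move=> n0; apply/negP => hn.
have [q hq] := natf0_pchar n0 hn.
have qpr := pcharf_prime hq.
have q0 : (q%:R : K) = 0 by apply/eqP; case/andP: hq.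
case: (eqVneq q p) => [eqp|neq].
  have := absp; rewrite -eqp q0 abs0 => /esym/eqP; rewrite invr_eq0 pnatr_eq0.
  by move=> /eqP q00; move: (prime_gt0 qpr); rewrite q00.
have cop : coprime q p by rewrite prime_coprime // dvdn_prime2 // eq_sym.
have [a _ ha] := Bezoutl p (prime_gt0 qpr).
move: ha; rewrite (eqP cop) => /dvdnP [b hb].
have hz : (1 + a%:R * p%:R : K) = 0.
  have := congr1 (fun n => n%:R : K) hb; rewrite /= natrD natrM natrM q0 mulr0.
  by move=> h; exact: h.
have h1 : abs (a%:R * p%:R) = abs (a%:R : K) * (p%:R)^-1 by rewrite absM absp.
have e1 : (1 : K) = - (a%:R * p%:R) by apply/eqP; rewrite -addr_eq0 hz.
have e : abs (1 : K) = abs (- (a%:R * p%:R)) by rewrite -e1.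
move: e; rewrite abs1 absN h1 => e.
have ha1 := abs_nat a.
have : (1 : R) < 1.
  rewrite [X in X < _]e; apply: (le_lt_trans (y := (p%:R : R)^-1)).
    rewrite -[X in _ <= X]mul1r ler_wpM2r //; first by rewrite invr_ge0 ler0n.
  by rewrite invf_lt1 ?pR_gt0 // ltr1n p_gt1.
by rewrite ltxx.
Qed.


Definition pinv (R : realType) (p : nat) : R := (p%:R)^-1.

Lemma pinv_gt0 : 0 < pinv R p.
Proof. by rewrite /pinv invr_gt0 pR_gt0. Qed.

Lemma pinv_ge0 : 0 <= pinv R p.
Proof. exact: ltW pinv_gt0. Qed.

Lemma pinv_le1 : pinv R p <= 1.
Proof. by rewrite /pinv invf_le1 ?pR_gt0 // ler1n ltnW // p_gt1. Qed.

Lemma pinvX_ge0 k : 0 <= pinv R p ^+ k.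
Proof. by rewrite exprn_ge0 // pinv_ge0. Qed.

Lemma abs_pX k : abs ((p ^ k)%:R) = pinv R p ^+ k.
Proof. by rewrite natrX absX absp. Qed.

Lemma abs_mul_pX t k : abs ((t * p ^ k)%:R) <= pinv R p ^+ k.
Proof. by rewrite natrM absM abs_pX ler_piMl ?pinvX_ge0 ?abs_nat. Qed.

Lemma pow_small (eps : R) : 0 < eps -> exists s, pinv R p ^+ s < eps.
Proof.
move=> e0; set n := Num.Def.archi_bound (eps^-1).
have h1 : eps^-1 < n%:R by apply: archi_boundP; rewrite invr_ge0 ltW.
have h2 : (n%:R : R) < (p%:R) ^+ n by rewrite -natrX ltr_nat ltn_expl // p_gt1.
exists n; rewrite /pinv exprVn -[eps]invrK ltf_pV2 ?posrE ?invr_gt0 //.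
  exact: lt_trans h1 h2.
by rewrite exprn_gt0 // pR_gt0.
Qed.

Lemma mod_close a b k : (a %% p ^ k = b %% p ^ k)%N ->
  abs (a%:R - b%:R) <= pinv R p ^+ k.
Proof.
wlog ab : a b / (b <= a)%N.
  move=> h e; case: (leqP b a) => [ba|/ltnW ab]; first exact: h.
  by rewrite absB; apply: h => //.
move=> e; have : (a == b %[mod p ^ k]) by rewrite e.
rewrite eqn_mod_dvd // => /dvdnP [t ht].
by rewrite -natrB // ht abs_mul_pX.
Qed.

Notation Zp := (Zp_set abs).

Lemma Zp_nat n : Zp (n%:R).
Proof. by move=> e e0; exists n; rewrite subrr abs0. Qed.

Lemma Zp_le1 z : Zp z -> abs z <= 1.
Proof.
move=> hz; rewrite leNgt; apply/negP => h.
have [n hn] : exists n, abs (z - n%:R) < abs z - 1 by apply: hz; rewrite subr_gt0.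
have : abs (z - n%:R + n%:R) < abs z.
  apply: abs_add_lt; first by apply: lt_le_trans hn _; rewrite lerBlDr lerDl.
  exact: le_lt_trans (abs_nat _) h.
by rewrite subrK ltxx.
Qed.

Lemma Zp_subn z n : Zp z -> Zp (z - n%:R).
Proof.
move=> hz e e0; have [s hs] := pow_small e0.
have [m hm] := hz e e0.
exists (m + n * p ^ s - n)%N.
have nle : (n <= m + n * p ^ s)%N.
  by apply: leq_trans (leq_addl m _); rewrite leq_pmulr // expn_gt0 prime_gt0.
rewrite natrB // natrD.
have -> : z - n%:R - (m%:R + (n * p ^ s)%:R - n%:R) = (z - m%:R) - (n * p ^ s)%:R by ring.
apply: abs_sub_lt => //; exact: le_lt_trans (abs_mul_pX _ _) hs.
Qed.

Lemma Zp_sub_close z m (e : R) : Zp z -> 0 < e -> exists n, abs (z - n%:R) < e /\ (m <= n)%N.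
Proof.
move=> hz e0; have [s hs] := pow_small e0.
have [n hn] := hz e e0.
exists (n + m * p ^ s)%N; split; last first.
  by apply: leq_trans (leq_addl n _); rewrite leq_pmulr // expn_gt0 prime_gt0.
rewrite natrD opprD addrA; apply: abs_sub_lt => //; exact: le_lt_trans (abs_mul_pX _ _) hs.
Qed.

Lemma abs_fact_mono n k : abs ((n + k)`!%:R) <= abs (n`!%:R : K).
Proof.
elim: k => [|k ih]; first by rewrite addn0.
by rewrite addnS factS natrM absM; apply: le_trans ih; rewrite ler_piMl ?abs_ge0 ?abs_nat.
Qed.

Lemma abs_fact_mono' n m : (n <= m)%N -> abs (m`!%:R) <= abs (n`!%:R : K).
Proof. by move=> h; rewrite -(subnKC h) abs_fact_mono. Qed.

Lemma abs_fact_p k : abs ((k * p)`!%:R : K) <= pinv R p ^+ k.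
Proof.
elim: k => [|k ih]; first by rewrite mul0n fact0 mulr1n abs1 expr0 lexx.
have hN : (0 < k.+1 * p)%N by rewrite muln_gt0 (prime_gt0 hp).
rewrite -(prednK hN) factS natrM absM prednK // exprS.
apply: ler_pM; rewrite ?abs_ge0 //.
  by rewrite natrM absM absp -[X in _ <= X]mul1r ler_wpM2r ?abs_nat // pinv_ge0.
apply: le_trans ih; apply: abs_fact_mono'.
have := prime_gt0 hp; rewrite mulSn; lia.
Qed.

Lemma fact_small (e : R) : 0 < e -> exists N, forall n, (N <= n)%N -> abs (n`!%:R : K) < e.
Proof.
move=> e0; have [s hs] := pow_small e0.
exists (s * p)%N => n hn; apply: (le_lt_trans _ hs).
exact: le_trans (abs_fact_mono' hn) (abs_fact_p s).
Qed.

Lemma prod_nat m n : \prod_(i < n) ((m%:R : K) - i%:R) = (m ^_ n)%:R.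
Proof.
elim: n => [|n ih]; first by rewrite big_ord0 ffactn0.
rewrite big_ord_recr /= ih ffactnSr natrM; case: (leqP n m) => h.
  by rewrite natrB.
by rewrite ffact_small // !mul0r.
Qed.

Lemma binomK_nat m n : binomK (m%:R : K) n = ('C(m, n))%:R.
Proof.
rewrite /binomK prod_nat -bin_ffact natrM mulfK //.
by apply: char0 => //; rewrite fact_gt0.
Qed.

Lemma prod_le1 w n : abs w <= 1 -> abs (\prod_(i < n) (w - i%:R)) <= 1.
Proof.
move=> hw; elim: n => [|n ih]; first by rewrite big_ord0 abs1.
rewrite big_ord_recr /= absM -[1 : R]mulr1; apply: ler_pM; rewrite ?abs_ge0 //.
by apply: abs_sub_le => //; rewrite abs_nat.
Qed.

Lemma prod_lip z w n : abs z <= 1 -> abs w <= 1 ->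
  abs (\prod_(i < n) (z - i%:R) - \prod_(i < n) (w - i%:R)) <= abs (z - w).
Proof.
move=> hz hw; elim: n => [|n ih].
  by rewrite !big_ord0 subrr abs0 abs_ge0.
rewrite !big_ord_recr /=.
set Pz := \prod_(i < n) _; set Pw := \prod_(i < n) _.
have -> : Pz * (z - n%:R) - Pw * (w - n%:R) = (Pz - Pw) * (z - n%:R) + Pw * (z - w) by ring.
apply: abs_add_le.
  rewrite absM; apply: le_trans _ ih; rewrite ler_piMr ?abs_ge0 //.
  by apply: abs_sub_le => //; rewrite abs_nat.
by rewrite absM ler_piMl ?abs_ge0 // prod_le1.
Qed.

Lemma fact_neq0 n : (n`!%:R : K) != 0.
Proof. by apply: char0; rewrite fact_gt0. Qed.

Lemma abs_fact_gt0 n : 0 < abs (n`!%:R : K).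
Proof.
rewrite lt_def abs_ge0 andbT; apply/eqP => /abs_eq0 /eqP.
by rewrite (negbTE (fact_neq0 n)).
Qed.

Lemma binom_lip z w n : abs z <= 1 -> abs w <= 1 ->
  abs (binomK z n - binomK w n) <= abs (z - w) / abs (n`!%:R : K).
Proof.
move=> hz hw; rewrite /binomK -mulrBl absM absV ?fact_neq0 //.
by rewrite ler_wpM2r ?prod_lip // invr_ge0 abs_ge0.
Qed.

Lemma binom_le1 z n : Zp z -> abs (binomK z n) <= 1.
Proof.
move=> hz; have [m hm] := hz _ (abs_fact_gt0 n).
have h : abs (binomK z n - binomK m%:R n) < 1.
  apply: (le_lt_trans (binom_lip n (Zp_le1 hz) (Zp_le1 (Zp_nat m)))).
  by rewrite ltr_pdivrMr ?abs_fact_gt0 // mul1r.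
rewrite -(subrK (binomK (m%:R) n) (binomK z n)); apply: abs_add_le; first exact: ltW.
by rewrite binomK_nat abs_nat.
Qed.


Lemma small_eq0 x : (forall e : R, 0 < e -> abs x < e) -> x = 0.
Proof.
move=> h; apply: abs_eq0; apply/eqP; rewrite eq_le abs_ge0 andbT leNgt.
by apply/negP => hx; have := h _ hx; rewrite ltxx.
Qed.

Lemma PS_diff (a : nat -> K) n m : (n <= m)%N ->
  \sum_(i < m) a i - \sum_(i < n) a i = \sum_(n <= i < m) a i.
Proof.
move=> h; rewrite -!(big_mkord xpredT) (big_cat_nat (leq0n n) h) /=.
by rewrite addrAC subrr add0r.
Qed.

Lemma tail_lt (a : nat -> K) (e : R) n m : 0 < e -> (n <= m)%N ->
  (forall i, (n <= i)%N -> abs (a i) < e) ->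
  abs (\sum_(i < m) a i - \sum_(i < n) a i) < e.
Proof.
move=> e0 h ha; rewrite PS_diff // big_seq; apply: abs_sum_lt => // i.
by rewrite mem_index_iota => /andP [hi _]; apply: ha.
Qed.

Lemma series_uniq (a : nat -> K) L1 L2 :
  series_to abs a L1 -> series_to abs a L2 -> L1 = L2.
Proof.
move=> h1 h2; apply/eqP; rewrite -subr_eq0; apply/eqP; apply: small_eq0 => e e0.
have [N1 hN1] := h1 e e0; have [N2 hN2] := h2 e e0.
have h := abs_sub_lt (hN1 _ (leq_maxl N1 N2)) (hN2 _ (leq_maxr N1 N2)).
set S := \sum_(i < maxn N1 N2) a i in h.
by rewrite absB (_ : L2 - L1 = (S - L1) - (S - L2)) //; ring.
Qed.

Lemma ssum_eq (a : nat -> K) L : series_to abs a L -> ssum abs a = L.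
Proof.
move=> h; have h' := h; apply: series_uniq _ h'.
exact: (epsilon_spec (inhabits (0:K)) (fun L => series_to abs a L) (ex_intro _ L h)).
Qed.

Definition tends0 (a : nat -> K) :=
  forall e : R, 0 < e -> exists N, forall n, (N <= n)%N -> abs (a n) < e.

Lemma series_conv (a : nat -> K) : tends0 a -> exists L, series_to abs a L.
Proof.
move=> ha.
apply: (Cp_complete hK (u := fun n => \sum_(i < n) a i)) => e e0.
have [N hN] := ha e e0; exists N => m n hm hn.
case: (leqP n m) => h.
  by apply: tail_lt => // i hi; apply: hN; apply: leq_trans hi.
rewrite absB; apply: tail_lt => //; first exact: ltnW.
by move=> i hi; apply: hN; apply: leq_trans hi.
Qed.

Lemma tail_limit (a : nat -> K) L (e : R) N : series_to abs a L -> 0 < e ->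
  (forall i, (N <= i)%N -> abs (a i) < e) ->
  forall n, (N <= n)%N -> abs (\sum_(i < n) a i - L) < e.
Proof.
move=> hL e0 ha n hn; have [M hM] := hL e e0.
have h1 := hM _ (leq_maxr n M).
have h2 : abs (\sum_(i < n) a i - \sum_(i < maxn n M) a i) < e.
  rewrite absB; apply: tail_lt => //; first exact: leq_maxl.
  by move=> i hi; apply: ha; apply: leq_trans hi.
by have := abs_add_lt h2 h1; rewrite addrA subrK.
Qed.

Lemma series_fin (a : nat -> K) N : (forall i, (N <= i)%N -> a i = 0) ->
  series_to abs a (\sum_(i < N) a i).
Proof.
move=> ha e e0; exists N => n hn; rewrite PS_diff // big_nat_cond big1 ?abs0 //.
by move=> i /andP [/andP [hi _] _]; apply: ha.
Qed.

Lemma ssum_fin (a : nat -> K) N : (forall i, (N <= i)%N -> a i = 0) ->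
  ssum abs a = \sum_(i < N) a i.
Proof. by move=> h; apply: ssum_eq; apply: series_fin. Qed.


Definition dN (g : nat -> K) : nat -> K := fun m => g m.+1 - g m.
Definition Dl (g : nat -> K) (k : nat) : K := iter k dN g 0.
Definition Pn (a : nat -> K) (B m : nat) : K := \sum_(0 <= k < B) a k * ('C(m, k))%:R.

Lemma iter_nabla_nat (f : K -> K) n m :
  iter n (@nabla K) f m%:R = iter n dN (fun m => f m%:R) m.
Proof.
elim: n m => [|n ih] m //=.
by rewrite /nabla /dN natr1 !ih.
Qed.

Lemma mahler_nat (f : K -> K) n : mahler f n = Dl (fun m => f m%:R) n.
Proof. by rewrite /mahler /Dl -iter_nabla_nat. Qed.

Lemma Pn_ext a B m : (m < B)%N -> Pn a B m = Pn a m.+1 m.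
Proof.
move=> h; rewrite /Pn (big_cat_nat (leq0n m.+1) h) /=.
have -> : \sum_(m.+1 <= k < B) a k * ('C(m, k))%:R = 0.
  rewrite big_nat_cond big1 // => i /andP [/andP [hi _] _].
  by rewrite bin_small // mulr0.
by rewrite addr0.
Qed.

Lemma Pn_step a m : Pn a m.+2 m.+1 = Pn a m.+1 m + Pn (fun k => a k.+1) m.+1 m.
Proof.
rewrite /Pn.
have E1 : \sum_(0 <= k < m.+2) a k * ('C(m.+1, k))%:R
   = a 0%N + \sum_(0 <= k < m.+1) a k.+1 * ('C(m, k.+1))%:R
     + \sum_(0 <= k < m.+1) a k.+1 * ('C(m, k))%:R.
  rewrite big_nat_recl // bin0 mulr1 -addrA -big_split /=; congr (_ + _).
  by apply: eq_bigr => k _; rewrite binS natrD mulrDr.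
have E2 : \sum_(0 <= k < m.+1) a k * ('C(m, k))%:R
   = a 0%N + \sum_(0 <= k < m.+1) a k.+1 * ('C(m, k.+1))%:R.
  rewrite big_nat_recl // bin0 mulr1; congr (_ + _).
  by rewrite [in RHS]big_nat_recr //= bin_small // mulr0 addr0.
by rewrite E1 E2.
Qed.

Lemma dN_Pn a : dN (fun m => Pn a m.+1 m) = fun m => Pn (fun k => a k.+1) m.+1 m.
Proof.
apply: functional_extensionality => m; rewrite /dN Pn_step; ring.
Qed.

Lemma Dl_Pn a n : Dl (fun m => Pn a m.+1 m) n = a n.
Proof.
elim: n a => [|n ih] a.
  by rewrite /Dl /= /Pn big_nat1 bin0 mulr1.
by rewrite /Dl iterSr dN_Pn; apply: ih.
Qed.

Lemma Dl_dN g k : Dl (dN g) k = Dl g k.+1.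
Proof. by rewrite /Dl iterSr. Qed.

Lemma Newton g m : g m = Pn (Dl g) m.+1 m.
Proof.
elim: m g => [|m ih] g.
  by rewrite /Pn big_nat1 bin0 mulr1.
have -> : g m.+1 = g m + dN g m by rewrite /dN; ring.
rewrite Pn_step (ih g) (ih (dN g)); congr (_ + _).
by rewrite /Pn; apply: eq_bigr => k _; rewrite Dl_dN.
Qed.

Lemma iter_dN_formula g n m :
  iter n dN g m = \sum_(0 <= j < n.+1) (-1) ^+ (n - j) * ('C(n, j))%:R * g (m + j)%N.
Proof.
elim: n m => [|n ih] m.
  by rewrite big_nat1 /= subnn expr0 bin0 !mul1r addn0.
rewrite iterS /dN !ih.
set T := \sum_(0 <= j < n.+1) (-1) ^+ (n - j) * ('C(n, j.+1))%:R * g (m + j.+1)%N.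
set U := \sum_(0 <= j < n) (-1) ^+ (n - j.+1) * ('C(n, j.+1))%:R * g (m + j.+1)%N.
have A : \sum_(0 <= j < n.+2) (-1) ^+ (n.+1 - j) * ('C(n.+1, j))%:R * g (m + j)%N
   = (-1) ^+ n.+1 * g m + \sum_(0 <= j < n.+1) (-1) ^+ (n - j) * ('C(n, j))%:R * g (m.+1 + j)%N + T.
  rewrite big_nat_recl // subn0 bin0 mulr1 addn0 -addrA -big_split /=; congr (_ + _).
  apply: eq_bigr => j _; rewrite subSS binS natrD addSnnS; ring.
have B : \sum_(0 <= j < n.+1) (-1) ^+ (n - j) * ('C(n, j))%:R * g (m + j)%N
   = (-1) ^+ n * g m + U.
  by rewrite big_nat_recl // subn0 bin0 mulr1 addn0.
have C : T = - U.
  rewrite /T big_nat_recr //= bin_small // mulr0 mul0r addr0 /U -sumrN.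
  rewrite big_nat_cond [in RHS]big_nat_cond; apply: eq_bigr => j /andP [/andP [_ hj] _].
  by rewrite -(subnSK hj) exprS mulN1r !mulNr.
rewrite A B C exprS mulN1r; ring.
Qed.

Lemma dN_bound (G : nat -> K) (e : R) : (forall m, abs (G m) <= e) ->
  forall n m, abs (iter n dN G m) <= e.
Proof.
move=> h; elim=> [|n ih] m //=.
by rewrite /dN; apply: abs_sub_le.
Qed.

Lemma dN_shift_sub g D n m :
  iter n dN g (m + D)%N - iter n dN g m = iter n dN (fun m => g (m + D)%N - g m) m.
Proof.
rewrite !iter_dN_formula -sumrB; apply: eq_bigr => j _.
by rewrite mulrBr addnAC.
Qed.

Lemma sum_triangle (f : nat -> nat -> K) M :
  \sum_(0 <= N < M) \sum_(0 <= n < N.+1) f n (N - n)%N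
  = \sum_(0 <= n < M) \sum_(0 <= j < M - n) f n j.
Proof.
elim: M => [|M ih]; first by rewrite !big_geq.
rewrite big_nat_recr //= ih.
have -> : \sum_(0 <= n < M.+1) \sum_(0 <= j < M.+1 - n) f n j
  = \sum_(0 <= n < M.+1) (\sum_(0 <= j < M - n) f n j + f n (M - n)%N).
  rewrite big_nat_cond [in RHS]big_nat_cond; apply: eq_bigr => n /andP [/andP [_ hn] _].
  by rewrite subSn // big_nat_recr.
rewrite big_split /=; congr (_ + _).
by rewrite [in RHS]big_nat_recr //= subnn [X in _ = _ + X]big_geq // addr0.
Qed.

Lemma bin_swap m n N : (n <= N)%N -> ('C(m, n) * 'C(m - n, N - n) = 'C(m, N) * 'C(N, n))%N.
Proof.
move=> hnN; case: (leqP N m) => hNm; last first.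
  rewrite (bin_small hNm) mul0n; case: (leqP n m) => hnm.
    by rewrite (@bin_small (m - n) (N - n)) ?muln0 //; lia.
  by rewrite bin_small.
have hnm : (n <= m)%N by apply: leq_trans hNm.
have f0 : (0 < n`! * (N - n)`! * (m - N)`!)%N by rewrite !muln_gt0 !fact_gt0.
apply/eqP; rewrite -(eqn_pmul2r f0); apply/eqP.
have e1 : (m - n - (N - n) = m - N)%N by rewrite subnBA // subnK.
have h1 := bin_fact hnm.
have h2 : ('C(m - n, N - n) * ((N - n)`! * (m - N)`!))%N = (m - n)`!.
  by rewrite -e1 bin_fact // leq_sub2r.
have h3 := bin_fact hNm.
have h4 := bin_fact hnN.
transitivity (m`!).
  by rewrite -h1 -h2; ring.
by rewrite -h3 -h4; ring.
Qed.

Lemma identity_I (a : nat -> K) (g : nat -> K) m :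
  \sum_(0 <= n < m.+1) a n * ('C(m, n))%:R * g (m - n)%N
  = \sum_(0 <= N < m.+1)
      (\sum_(0 <= k < N.+1) ('C(N, k))%:R * a k * Dl g (N - k)%N) * ('C(m, N))%:R.
Proof.
have -> : \sum_(0 <= n < m.+1) a n * ('C(m, n))%:R * g (m - n)%N
  = \sum_(0 <= n < m.+1) \sum_(0 <= j < m.+1 - n)
       (a n * ('C(m, n))%:R) * (Dl g j * ('C(m - n, j))%:R).
  rewrite big_nat_cond [in RHS]big_nat_cond; apply: eq_bigr => n /andP [/andP [_ hn] _].
  by rewrite (Newton g (m - n)) /Pn mulr_sumr subSn.
rewrite -sum_triangle; apply: eq_bigr => N _.
rewrite mulr_suml big_nat_cond [in RHS]big_nat_cond; apply: eq_bigr => n /andP [/andP [_ hn] _].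
have e : (('C(m, n))%:R * ('C(m - n, N - n))%:R : K) = ('C(m, N))%:R * ('C(N, n))%:R.
  by rewrite -!natrM bin_swap.
transitivity (a n * Dl g (N - n)%N * (('C(m, n))%:R * ('C(m - n, N - n))%:R)); first ring.
by rewrite e; ring.
Qed.


Lemma p_dvd_bin s j : (0 < j < p ^ s)%N -> (p %| 'C(p ^ s, j))%N.
Proof.
case/andP => j0 js; apply: contraT => nd.
have cop : coprime (p ^ s) ('C(p ^ s, j)).
  by apply: coprimeXl; rewrite prime_coprime.
have hd : (p ^ s %| j * 'C(p ^ s, j))%N.
  by rewrite -(prednK j0) -mul_bin_diag dvdn_mulr.
move: hd; rewrite Gauss_dvdl // => /(dvdn_leq j0); rewrite leqNgt js.
by [].
Qed.

Lemma abs_bin_p s j : (0 < j < p ^ s)%N -> abs (('C(p ^ s, j))%:R : K) <= pinv R p.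
Proof.
move=> h; have /dvdnP [t ht] := p_dvd_bin h.
by rewrite ht natrM absM absp ler_piMl ?pinv_ge0 ?abs_nat.
Qed.

Lemma key_step s (h : nat -> K) (Bt e : R) : 0 <= Bt -> 0 <= e ->
  (forall m, abs (h m) <= Bt) -> (forall m, abs (h (m + p ^ s)%N - h m) <= e) ->
  forall m, abs (iter (p ^ s) dN h m) <= Num.max e (Bt * pinv R p).
Proof.
move=> B0 e0 hB he m; set D := (p ^ s)%N.
have D0 : (0 < D)%N by rewrite expn_gt0 prime_gt0.
set E := Num.max e (Bt * pinv R p).
have eE : e <= E by rewrite le_max lexx.
have BE : Bt * pinv R p <= E by rewrite le_max lexx orbT.
rewrite iter_dN_formula -(prednK D0) big_nat_recr //= big_nat_recl //.
rewrite prednK // subnn expr0 binn subn0 bin0 addn0 !mulr1n !mul1r !mulr1.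
set M := \sum_(0 <= i < D.-1) _.
have -> : (-1) ^+ D * h m + M + h (m + D)%N
   = (h (m + D)%N - h m) + ((-1) ^+ D + 1) * h m + M by ring.
apply: abs_add_le; first apply: abs_add_le.
- exact: le_trans (he m) eE.
- rewrite absM; apply: le_trans BE; rewrite mulrC.
  case: (boolP (odd D)) => hD.
    by rewrite -signr_odd hD expr1 addNr abs0 mulr0 mulr_ge0 ?pinv_ge0.
  have p2 : p = 2%N.
    have [//|op] := even_prime hp.
    by move: hD; rewrite /D oddX op orbT.
  rewrite -signr_odd (negbTE hD) expr0.
  have -> : (1 + 1 : K) = p%:R by rewrite p2 mulr2n.
  by rewrite absp /pinv ler_wpM2r ?invr_ge0 ?ler0n.
- rewrite /M big_seq; apply: abs_sum_le; first exact: le_trans e0 eE.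
  move=> i; rewrite mem_index_iota => /andP [_ hi].
  rewrite !absM abs_sign mul1r; apply: le_trans BE; rewrite mulrC.
  apply: ler_pM; rewrite ?abs_ge0 //; apply: abs_bin_p.
  by move: hi D0; rewrite /D; lia.
Qed.

Lemma max_mul_le (a b c : R) : 0 <= a -> 0 <= c -> c <= 1 ->
  Num.max a b * c <= Num.max a (b * c).
Proof.
move=> a0 c0 c1; case: (leP a b) => hab.
  by rewrite le_max lexx orbT.
by rewrite le_max ler_piMr.
Qed.

Lemma mahler_decay (g : nat -> K) (B : R) : 0 <= B ->
  (forall m, abs (g m) <= B) ->
  (forall e : R, 0 < e -> exists s, forall m, abs (g (m + p ^ s)%N - g m) < e) ->
  tends0 (Dl g).
Proof.
move=> B0 hB hU eps eps0.
have e0 : 0 < eps / 2 by rewrite divr_gt0.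
have [s hs] := hU _ e0.
have [t ht] : exists t, pinv R p ^+ t < eps / (B + 1).
  by apply: pow_small; rewrite divr_gt0 // ltr_wpDl.
set D := (p ^ s)%N.
have claim : forall t', forall m, abs (iter (t' * D) dN g m) <= Num.max (eps / 2) (B * pinv R p ^+ t').
  elim=> [|t' ih] m.
    by rewrite mul0n /= expr0 mulr1 le_max hB orbT.
  rewrite mulSn iterD.
  have K1 := @key_step s (iter (t' * D) dN g) (Num.max (eps / 2) (B * pinv R p ^+ t')) (eps / 2).
  apply: le_trans (K1 _ _ _ _ m) _.
  - by rewrite le_max ltW.
  - exact: ltW.
  - exact: ih.
  - move=> m'; rewrite dN_shift_sub; apply: dN_bound => m''; exact: ltW (hs m'').
  rewrite ge_max le_max lexx /=; apply: le_trans (max_mul_le _ _ _ _) _.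
  - exact: ltW.
  - exact: pinv_ge0.
  - exact: pinv_le1.
  by rewrite exprSr mulrA.
exists (t * D)%N => n hn.
rewrite /Dl -(subnK hn) iterD; apply: le_lt_trans (dN_bound (claim t) _ _) _.
rewrite gt_max ltr_pdivrMr // ltr_pMr // ltr1n /=.
have : B * pinv R p ^+ t <= (B + 1) * pinv R p ^+ t.
  by rewrite ler_wpM2r ?pinvX_ge0 // lerDl.
move/le_lt_trans; apply; rewrite mulrC -ltr_pdivlMr //; last by rewrite ltr_wpDl.
Qed.

Section UC.
Variable phi : K -> K.
Hypothesis hphi : cont_on_Zp abs phi.

Lemma cont_pair z (e : R) : Zp z -> 0 < e ->
  exists2 delta : R, 0 < delta & forall a b, Zp a -> Zp b ->
    abs (a - z) < delta -> abs (b - z) < delta -> abs (phi a - phi b) < e.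
Proof.
move=> hz e0; have [d d0 hd] := hphi hz e0.
exists d => // a' b' ha hb h1 h2.
have := abs_tri_lt (hd _ ha h1) (y := phi z) (z := phi b') _.
apply; rewrite absB; exact: hd.
Qed.

Fixpoint seqJ (nx : nat -> nat -> nat) (k : nat) : nat :=
  match k with 0 => 0%N | k'.+1 => nx k' (seqJ nx k') end.

Lemma UC_nat (e : R) : 0 < e ->
  exists s, forall m, abs (phi ((m + p ^ s)%N)%:R - phi m%:R) < e.
Proof.
move=> e0; apply: NNPP => hneg.
pose F m s := e <= abs (phi ((m + p ^ s)%N)%:R - phi m%:R).
have hbad : forall s, exists m, F m s.
  move=> s; apply: NNPP => h2; apply: hneg; exists s => m.
  rewrite ltNge; apply/negP => h3; apply: h2; by exists m.
pose bad k j := forall s, exists s', (s <= s')%N /\ exists m, (m %% p ^ k = j)%N /\ F m s'.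
have bad0 : bad 0%N 0%N.
  move=> s; have [m hm] := hbad s; exists s; split => //; exists m; split => //.
  by rewrite expn0 modn1.
have step : forall k j, bad k j -> exists r, bad k.+1 r /\ (r %% p ^ k = j)%N.
  move=> k j hb; apply: NNPP => hno.
  have hS : forall N, exists S, forall r, (r < N)%N -> (r %% p ^ k = j)%N ->
      forall s', (S <= s')%N -> forall m, (m %% p ^ k.+1 = r)%N -> ~ F m s'.
    elim=> [|N [S1 hS1]]; first by exists 0%N.
    case: (eqVneq (N %% p ^ k) j)%N => hN; last first.
      exists S1 => r; rewrite ltnS leq_eqVlt => /orP [/eqP -> hr|hr]; first by rewrite hr eqxx in hN.
      exact: hS1.
    have nb : ~ bad k.+1 N by move=> hbN; apply: hno; exists N.
    have [s0 hs0] : exists s0, forall s', (s0 <= s')%N -> forall m, (m %% p ^ k.+1 = N)%N -> ~ F m s'.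
      apply: NNPP => h; apply: nb => s0; apply: NNPP => h'; apply: h; exists s0 => s' hs' m hm hF.
      by apply: h'; exists s'; split => //; exists m.
    exists (maxn S1 s0) => r; rewrite ltnS leq_eqVlt => /orP [/eqP -> _|hr hrj] s' hs'.
      by apply: hs0; move: hs'; rewrite geq_max => /andP [].
    by apply: hS1 => //; move: hs'; rewrite geq_max => /andP [].
  have [S hSS] := hS (p ^ k.+1)%N.
  have [s' [hs' [m [hm hF]]]] := hb S.
  apply: (hSS (m %% p ^ k.+1)%N _ _ s' hs' m (erefl _) hF).
    by rewrite ltn_pmod // expn_gt0 prime_gt0.
  by rewrite (@modn_dvdm (p ^ k.+1) m (p ^ k)) ?hm // expnS dvdn_mull.
pose nx k j := epsilon (inhabits 0%N) (fun r => bad k.+1 r /\ (r %% p ^ k = j)%N).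
pose J := seqJ nx.
have hJ : forall k, bad k (J k) /\ (J k.+1 %% p ^ k = J k)%N.
  elim=> [|k [ih1 ih2]].
    split => //; exact: (epsilon_spec (inhabits 0%N) _ (step _ _ bad0)).2.
  have h1 := epsilon_spec (inhabits 0%N) _ (step _ _ ih1).
  split; first exact: h1.1.
  exact: (epsilon_spec (inhabits 0%N) _ (step _ _ h1.1)).2.
have Jmod : forall k k', (k <= k')%N -> (J k' %% p ^ k = J k %% p ^ k)%N.
  move=> k k' hk; elim: k' hk => [|k' ih]; first by rewrite leqn0 => /eqP ->.
  rewrite leq_eqVlt => /orP [/eqP -> //|]; rewrite ltnS => hk.
  rewrite -(modn_dvdm (J k'.+1) (dvdn_exp2l p hk)) (hJ k').2; exact: ih.
have [x0 hx0] : exists L, forall eps : R, 0 < eps -> exists N, forall n, (N <= n)%N ->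
    abs ((J n)%:R - L) < eps.
  apply: (Cp_complete hK (u := fun n => (J n)%:R)) => eps eps0.
  have [N hN] := pow_small eps0; exists N => m n hm hn.
  apply: le_lt_trans hN; apply: mod_close; by rewrite !Jmod.
have Zx0 : Zp x0.
  move=> eps eps0; have [N hN] := hx0 eps eps0; exists (J N); rewrite absB; exact: hN.
have [d d0 hd] := cont_pair Zx0 e0.
have [k hk] := pow_small d0.
have [s' [hs' [m [hm hF]]]] := (hJ k).1 k.
have [N hN] := hx0 d d0.
have hn := hN (maxn N k) (leq_maxl _ _).
have Jk : (J (maxn N k) %% p ^ k = m %% p ^ k)%N.
  by rewrite Jmod ?leq_maxr // -hm modn_mod.
have c1 : abs (m%:R - x0) < d.
  rewrite -(subrK (J (maxn N k))%:R m%:R) -addrA; apply: abs_add_lt => //.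
  by apply: le_lt_trans hk; apply: mod_close; rewrite Jk.
have c2 : abs (((m + p ^ s')%N)%:R - x0) < d.
  rewrite -(subrK (J (maxn N k))%:R ((m + p ^ s')%N)%:R) -addrA; apply: abs_add_lt => //.
  apply: le_lt_trans hk; apply: mod_close.
  by rewrite Jk -(subnK hs') expnD addnC modnMDl.
have h := hd _ _ (Zp_nat _) (Zp_nat _) c2 c1.
by move: hF; rewrite /F leNgt h.
Qed.

Lemma sum_ge_term (f : nat -> R) N r : (forall i, 0 <= f i) -> (r < N)%N ->
  f r <= \sum_(0 <= i < N) f i.
Proof.
move=> f0; elim: N => [//|N ih]; rewrite ltnS leq_eqVlt => /orP [/eqP ->|hr].
  rewrite big_nat_recr //= lerDr; apply: sumr_ge0 => i _; exact: f0.
rewrite big_nat_recr //=; apply: le_trans (ih hr) _; rewrite lerDl; exact: f0.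
Qed.

Lemma bounded_nat : exists B : R, 1 <= B /\ forall m, abs (phi m%:R) <= B.
Proof.
have [s hs] := UC_nat ltr01; set D := (p ^ s)%N.
have D0 : (0 < D)%N by rewrite expn_gt0 prime_gt0.
exists (1 + \sum_(0 <= i < D) abs (phi i%:R)); split.
  by rewrite lerDl sumr_ge0 // => i _; apply: abs_ge0.
have tel : forall q r, abs (phi ((r + q * D)%N)%:R - phi r%:R) < 1.
  move=> q r; elim: q => [|q ih]; first by rewrite mul0n addn0 subrr abs0.
  rewrite mulSnr addnA; apply: abs_tri_lt ih; exact: hs.
move=> m; rewrite (divn_eq m D) addnC.
rewrite -(subrK (phi (m %% D)%:R) (phi ((m %% D + m %/ D * D)%N)%:R)).
apply: abs_add_le.
  apply: le_trans (ltW (tel _ _)) _; rewrite lerDl sumr_ge0 // => i _; exact: abs_ge0.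
have hle := @sum_ge_term (fun i => abs (phi i%:R)) D (m %% D)%N (fun i => abs_ge0 _) (ltn_pmod m D0).
apply: le_trans hle _; by rewrite lerDr.
Qed.

Lemma bounded_Zp : exists B : R, 1 <= B /\ (forall m, abs (phi m%:R) <= B) /\
  forall z, Zp z -> abs (phi z) <= B.
Proof.
have [B [B1 hB]] := bounded_nat; exists B; split => //; split => // z hz.
have [d d0 hd] := hphi hz ltr01.
have [m hm] := hz d d0.
rewrite -(subrK (phi m%:R) (phi z)); apply: abs_add_le => //.
apply: le_trans B1; apply: ltW; rewrite absB; apply: hd (Zp_nat _) _.
by rewrite absB.
Qed.

End UC.


Section Main.
Variables (phi : K -> K) (x y : K).
Hypotheses (hphi : cont_on_Zp abs phi) (hx : Zp x) (hy : Zp y).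

Definition Aco (k : nat) : K := (-1) ^+ k * (k`!)%:R * binomK y k.

Lemma abs_Aco k : abs (Aco k) <= abs ((k`!)%:R : K).
Proof.
have h := binom_le1 k hy; rewrite /Aco -mulrA absM abs_sign mul1r absM.
by rewrite ler_piMr ?abs_ge0.
Qed.

Lemma abs_Aco1 k : abs (Aco k) <= 1.
Proof. exact: le_trans (abs_Aco k) (abs_nat _). Qed.

Lemma Aco_tends0 : tends0 Aco.
Proof.
move=> e e0; have [N hN] := fact_small e0; exists N => n hn.
exact: le_lt_trans (abs_Aco n) (hN n hn).
Qed.

Lemma chi_nat m : one_minus_x_star abs y m%:R = Pn Aco m.+1 m.
Proof.
rewrite /one_minus_x_star /Sop (ssum_fin (N := m.+1)).
  rewrite /Pn big_mkord; apply: eq_bigr => k _.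
  by rewrite binomK_nat mulr1.
by move=> i hi; rewrite binomK_nat bin_small // mulr0 mul0r.
Qed.

Lemma mahler_chi k : mahler (one_minus_x_star abs y) k = Aco k.
Proof.
rewrite mahler_nat.
have -> : (fun m : nat => one_minus_x_star abs y m%:R) = (fun m => Pn Aco m.+1 m).
  by apply: functional_extensionality => m; rewrite chi_nat.
exact: Dl_Pn.
Qed.

Definition gN (m : nat) : K := phi m%:R.
Definition bco (j : nat) : K := Dl gN j.
Definition cco (n : nat) : K := \sum_(k < n.+1) ('C(n, k))%:R * Aco k * bco (n - k).

Definition Ut (n : nat) (z : K) : K := Aco n * binomK z n * phi (z - n%:R).
Definition Vt (n : nat) (z : K) : K := cco n * binomK z n.

Lemma mahler_phi j : mahler phi j = bco j.
Proof. by rewrite mahler_nat. Qed.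

Lemma first_eq : Top abs x phi y = integral_mu abs phi x (one_minus_x_star abs y).
Proof.
rewrite /Top /Sop /integral_mu; congr ssum; apply: functional_extensionality => k.
by rewrite mahler_chi.
Qed.

Lemma integral_eq : integral_mu abs phi x (one_minus_x_star abs y) = ssum abs (fun n => Ut n x).
Proof.
rewrite /integral_mu; congr ssum; apply: functional_extensionality => k.
by rewrite mahler_chi.
Qed.

Lemma conv_eq : conv abs (one_minus_x_star abs y) phi x = ssum abs (fun n => Vt n x).
Proof.
rewrite /conv; congr ssum; apply: functional_extensionality => n.
rewrite /Vt /cco; congr (_ * _); apply: eq_bigr => k _.
by rewrite mahler_chi mahler_phi.
Qed.

Lemma UV_nat m M : (m < M)%N -> \sum_(n < M) Ut n m%:R = \sum_(n < M) Vt n m%:R.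
Proof.
move=> hM.
have z1 : forall n, (m < n)%N -> Ut n m%:R = 0.
  by move=> n hn; rewrite /Ut binomK_nat bin_small // mulr0 mul0r.
have z2 : forall n, (m < n)%N -> Vt n m%:R = 0.
  by move=> n hn; rewrite /Vt binomK_nat bin_small // mulr0.
rewrite -(big_mkord xpredT (fun n => Ut n m%:R)) -(big_mkord xpredT (fun n => Vt n m%:R)) (big_cat_nat (leq0n m.+1) hM) /= [in RHS](big_cat_nat (leq0n m.+1) hM) /=.
have e1 : \sum_(m.+1 <= i < M) Ut i m%:R = 0.
  by rewrite big_nat_cond big1 // => i /andP [/andP [hi _] _]; rewrite z1.
have e2 : \sum_(m.+1 <= i < M) Vt i m%:R = 0.
  by rewrite big_nat_cond big1 // => i /andP [/andP [hi _] _]; rewrite z2.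
rewrite e1 e2 !addr0.
have -> : \sum_(0 <= i < m.+1) Ut i m%:R = \sum_(0 <= n < m.+1) Aco n * ('C(m, n))%:R * gN (m - n)%N.
  rewrite big_nat_cond [in RHS]big_nat_cond; apply: eq_bigr => n /andP [/andP [_ hn] _].
  by rewrite /Ut /gN binomK_nat natrB.
rewrite identity_I; apply: eq_bigr => N _.
by rewrite /Vt /cco binomK_nat big_mkord.
Qed.


Definition Wt (n : nat) (z : K) : K := Ut n z - Vt n z.

Lemma cont_sum (W : nat -> K -> K) (t : K) :
  (forall n (e : R), 0 < e -> exists2 d : R, 0 < d &
     forall m, abs (t - m%:R) < d -> abs (W n t - W n m%:R) < e) ->
  forall N (e : R), 0 < e -> exists2 d : R, 0 < d &
     forall m, abs (t - m%:R) < d ->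
       abs (\sum_(n < N) W n t - \sum_(n < N) W n m%:R) < e.
Proof.
move=> hW; elim=> [|N ih] e e0.
  by exists 1 => // m _; rewrite !big_ord0 subrr abs0.
have [d1 d10 hd1] := ih e e0; have [d2 d20 hd2] := hW N e e0.
exists (Num.min d1 d2); first by rewrite lt_min d10 d20.
move=> m; rewrite lt_min => /andP [h1 h2].
rewrite !big_ord_recr /=.
have -> : \sum_(i < N) W i t + W N t - (\sum_(i < N) W i m%:R + W N m%:R)
  = (\sum_(i < N) W i t - \sum_(i < N) W i m%:R) + (W N t - W N m%:R) by ring.
by apply: abs_add_lt; [apply: hd1 | apply: hd2].
Qed.

Lemma Wt_cont (B : R) : 1 <= B -> (forall z, Zp z -> abs (phi z) <= B) ->
  forall n (e : R), 0 < e -> exists2 d : R, 0 < d &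
     forall m, abs (x - m%:R) < d -> abs (Wt n x - Wt n m%:R) < e.
Proof.
move=> B1 hBz n e e0.
set Cn := B + abs (cco n).
have Cn0 : 0 < Cn by rewrite /Cn; apply: lt_le_trans (ltr01) _; apply: le_trans B1 _; rewrite lerDl abs_ge0.
have BC : B <= Cn by rewrite /Cn lerDl abs_ge0.
have cC : abs (cco n) <= Cn by rewrite /Cn lerDr; apply: le_trans B1; exact: ler01.
have [dp dp0 hdp] := hphi (Zp_subn n hx) e0.
have fn0 := abs_fact_gt0 n.
exists (Num.min (e * abs ((n`!)%:R : K) / Cn) dp).
  by rewrite lt_min dp0 andbT !mulr_gt0 // invr_gt0.
move=> m; rewrite lt_min => /andP [h1 h2].
set bx := binomK x n; set bm := binomK (m%:R : K) n.
set px := phi (x - n%:R); set pm := phi ((m%:R : K) - n%:R).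
have hb : abs (bx - bm) < e / Cn.
  apply: le_lt_trans (binom_lip n (Zp_le1 hx) (Zp_le1 (Zp_nat m))) _.
  rewrite ltr_pdivrMr // (mulrC e) -mulrA mulrC ltr_pdivlMr //.
  by rewrite -ltr_pdivlMr.
have key : forall q, 0 <= q -> q <= Cn -> q * abs (bx - bm) < e.
  move=> q q0 qC; apply: (le_lt_trans (y := Cn * abs (bx - bm))).
    by rewrite ler_wpM2r ?abs_ge0.
  by rewrite -ltr_pdivlMl // mulrC.
have hpd : abs (px - pm) < e.
  rewrite absB; apply: hdp; first exact: Zp_subn (Zp_nat m).
  rewrite (_ : m%:R - n%:R - (x - n%:R) = m%:R - x); first by rewrite absB.
  ring.
have -> : Wt n x - Wt n m%:R = Aco n * ((bx - bm) * px + bm * (px - pm)) - cco n * (bx - bm).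
  by rewrite /Wt /Ut /Vt -/bx -/bm -/px -/pm; ring.
apply: abs_sub_lt.
  rewrite absM; apply: le_lt_trans (ler_piMl (abs_ge0 _) (abs_Aco1 n)) _.
  apply: abs_add_lt.
    rewrite absM mulrC; apply: le_lt_trans (key (abs px) (abs_ge0 _) _) => //.
    by apply: (le_trans _ BC); apply: hBz; apply: Zp_subn.
  rewrite absM; apply: le_lt_trans hpd; rewrite ler_piMl ?abs_ge0 //.
  exact: binom_le1 n (Zp_nat m).
by rewrite absM; apply: key => //; apply: abs_ge0.
Qed.

Lemma second_eq : ssum abs (fun n => Ut n x) = ssum abs (fun n => Vt n x).
Proof.
have [B [B1 [hBn hBz]]] := bounded_Zp hphi.
have B0 : 0 < B by apply: lt_le_trans B1; exact: ltr01.
have hb_bd : forall j, abs (bco j) <= B := fun j => dN_bound hBn j 0.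
have hb0 : tends0 bco := mahler_decay (ltW B0) hBn (UC_nat hphi).
have hc0 : tends0 cco.
  move=> e e0; have [K0 hK0] := Aco_tends0 (divr_gt0 e0 B0).
  have [J0 hJ0] := hb0 e e0; exists (K0 + J0)%N => n hn.
  rewrite /cco; apply: abs_sum_lt => // k _.
  rewrite -mulrA absM [abs (Aco k * _)]absM; apply: le_lt_trans (ler_piMl _ (abs_nat _)) _.
    by rewrite mulr_ge0 ?abs_ge0.
  case: (leqP K0 k) => hk.
    apply: (le_lt_trans (y := abs (Aco k) * B)).
      by rewrite ler_wpM2l ?abs_ge0.
    by rewrite -ltr_pdivlMr //; apply: hK0.
  apply: le_lt_trans (ler_piMl (abs_ge0 _) (abs_Aco1 k)) _.
  apply: hJ0; move: hn hk (ltn_ord k); lia.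
have hU : forall e : R, 0 < e -> exists N, forall n, (N <= n)%N -> forall z, Zp z -> abs (Ut n z) < e.
  move=> e e0; have [N hN] := Aco_tends0 (divr_gt0 e0 B0); exists N => n hn z hz.
  rewrite /Ut -mulrA absM [abs (binomK _ _ * _)]absM; apply: (le_lt_trans (y := abs (Aco n) * B)).
    rewrite ler_wpM2l ?abs_ge0 //; apply: (le_trans (y := abs (phi (z - n%:R)))).
      by rewrite ler_piMl ?abs_ge0 // binom_le1.
    by apply: hBz; apply: Zp_subn.
  by rewrite -ltr_pdivlMr //; apply: hN.
have hV : forall e : R, 0 < e -> exists N, forall n, (N <= n)%N -> forall z, Zp z -> abs (Vt n z) < e.
  move=> e e0; have [N hN] := hc0 e e0; exists N => n hn z hz.
  rewrite /Vt absM; apply: le_lt_trans (hN n hn).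
  by rewrite ler_piMr ?abs_ge0 // binom_le1.
have [L1 hL1] : exists L, series_to abs (fun n => Ut n x) L.
  apply: series_conv => e e0; have [N hN] := hU e e0; exists N => n hn; exact: hN.
have [L2 hL2] : exists L, series_to abs (fun n => Vt n x) L.
  apply: series_conv => e e0; have [N hN] := hV e e0; exists N => n hn; exact: hN.
rewrite (ssum_eq hL1) (ssum_eq hL2).
apply/eqP; rewrite -subr_eq0; apply/eqP; apply: small_eq0 => e e0.
have [N1 hN1] := hU e e0; have [N2 hN2] := hV e e0.
set N0 := maxn N1 N2.
have hN1' : forall i, (N0 <= i)%N -> forall z, Zp z -> abs (Ut i z) < e.
  move=> i hi; apply: hN1; exact: leq_trans (leq_maxl _ _) hi.
have hN2' : forall i, (N0 <= i)%N -> forall z, Zp z -> abs (Vt i z) < e.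
  move=> i hi; apply: hN2; exact: leq_trans (leq_maxr _ _) hi.
have t1 : abs (\sum_(n < N0) Ut n x - L1) < e.
  apply: (tail_limit (N := N0) hL1 e0) => // i hi; exact: hN1'.
have t2 : abs (\sum_(n < N0) Vt n x - L2) < e.
  apply: (tail_limit (N := N0) hL2 e0) => // i hi; exact: hN2'.
have [d d0 hd] := cont_sum (Wt_cont B1 hBz) N0 e0.
have [m hm] := hx d0.
set M := maxn N0 m.+1.
have t3 : abs (\sum_(n < N0) Ut n m%:R - \sum_(n < M) Ut n m%:R) < e.
  rewrite absB; apply: (tail_lt (a := fun i => Ut i m%:R) e0 (leq_maxl N0 m.+1)) => i hi.
  by apply: hN1' => //; apply: Zp_nat.
have t4 : abs (\sum_(n < N0) Vt n m%:R - \sum_(n < M) Vt n m%:R) < e.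
  rewrite absB; apply: (tail_lt (a := fun i => Vt i m%:R) e0 (leq_maxl N0 m.+1)) => i hi.
  by apply: hN2' => //; apply: Zp_nat.
have t5 := hd m hm.
have e5 := UV_nat (leq_maxr N0 m.+1).
rewrite /Wt !sumrB in t5.
set SUx := \sum_(n < N0) Ut n x in t1 t5.
set SVx := \sum_(n < N0) Vt n x in t2 t5.
set SUm := \sum_(n < N0) Ut n m%:R in t3 t5.
set SVm := \sum_(n < N0) Vt n m%:R in t4 t5.
rewrite -/M in e5.
set SUM := \sum_(n < M) Ut n m%:R in t3 e5.
set SVM := \sum_(n < M) Vt n m%:R in t4 e5.
have -> : L1 - L2 = - (SUx - L1) + (SVx - L2) + (SUx - SVx - (SUm - SVm))
     + (SUm - SUM) - (SVm - SVM) by rewrite e5; ring.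
apply: abs_sub_lt => //; apply: abs_add_lt => //; apply: abs_add_lt => //.
by apply: abs_add_lt => //; rewrite absN.
Qed.

End Main.

End Basic.

Theorem proposition6p8 (p : nat) (K : closedFieldType) (R : realType)
  (abs : K -> R) (hp : prime p) (hK : is_Cp p abs)
  (phi : K -> K) (hphi : cont_on_Zp abs phi)
  (x y : K) (hx : Zp_set abs x) (hy : Zp_set abs y) :
  Top abs x phi y = integral_mu abs phi x (one_minus_x_star abs y)
  /\ integral_mu abs phi x (one_minus_x_star abs y)
     = conv abs (one_minus_x_star abs y) phi x.
Proof.
split; first exact: (first_eq hp hK phi x y).
rewrite (integral_eq hp hK phi x y) (conv_eq hp hK phi x y).
exact: (second_eq hp hK hphi hx hy).
Qed.
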